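(* Let $N,n,m,p$ be positive integers, $A\in\mathbb{R}^{n\times n}$, $B\in\mathbb{R}^{n\times p}$, $C\in\mathbb{R}^{m\times n}$, $H\in\mathbb{R}^{n\times m}$, $W=[w_{ij}]\in\mathbb{R}^{N\times N}$ with $w_{ii}=0$ for all $i$, $\Delta=\mathrm{diag}(\delta_1,\dots,\delta_N)$ with $\delta_i\in\{0,1\}$, and $h>0$. Put $\mathcal{B}(h)=\int_0^h e^{A\tau}d\tau\,B$, $\mathcal{H}(h)=\int_0^h e^{A\tau}d\tau\,HC$, $\Phi_s=I_N\otimes e^{Ah}+W\otimes\mathcal{H}(h)$, $\Psi_s=\Delta\otimes\mathcal{B}(h)$. Let $\sigma(W)=\{\lambda_1,\dots,\lambda_r\}$ be the distinct eigenvalues of $W$ and $E_i=e^{Ah}+\lambda_i\mathcal{H}(h)$. Assume $W$ is singular and $0\notin\sigma(E_i)$ for every $i=1,\dots,r$. If the networked sampled-data system $X(k+1)=\Phi_sX(k)+\Psi_sU(k)$ is controllable, then the pair $(e^{Ah},\mathcal{B}(h))$ is controllable.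
   Context: The networked sampled-data system is the discrete-time system $X(k+1)=\Phi_sX(k)+\Psi_sU(k)$; it is called controllable if every initial state can be steered to the origin in finitely many steps. For $F\in\mathbb{C}^{q\times q}$, $G\in\mathbb{C}^{q\times s}$, the pair $(F,G)$ is called controllable if $\mathrm{rank}[sI_q-F,\ G]=q$ for every $s\in\mathbb{C}$. $\sigma(\cdot)$ denotes the set of eigenvalues and $\otimes$ the Kronecker product. *)

(* Defs.v *)
From HB Require Import structures.
From mathcomp Require Import all_boot all_order all_algebra.
From mathcomp Require Import all_classical all_reals all_analysis.
From mathcomp Require Import complex mxtens.
Set Implicit Arguments. Unset Strict Implicit. Unset Printing Implicit Defensive.
Import Order.TTheory GRing.Theory Num.Theory numFieldNormedType.Exports.
Local Open Scope ring_scope.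
Local Open Scope classical_set_scope.

Section Defs.
Variable R : realType.

Definition expmx (n : nat) (A : 'M[R]_n) (t : R) : 'M[R]_n :=
  \matrix_(i, j) limn ((fun N : nat => \sum_(0 <= k < N) ((A ^+ k) i j * t ^+ k / (k`!)%:R)) : nat -> R).

Definition intexpmx (n : nat) (A : 'M[R]_n) (h : R) : 'M[R]_n :=
  \matrix_(i, j) Rintegral lebesgue_measure `[0, h] (fun tau => expmx A tau i j).

Local Open Scope complex_scope.

Definition cmx (k l : nat) (M : 'M[R]_(k, l)) : 'M[R[i]]_(k, l) :=
  map_mx (fun x : R => x%:C) M.

Definition controllable_pair (q s : nat) (F : 'M[R[i]]_q) (G : 'M[R[i]]_(q, s)) :=
  forall z : R[i], \rank (row_mx (z%:M - F) G) = q.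

Fixpoint state_traj (d e : nat) (Phi : 'M[R]_d) (Psi : 'M[R]_(d, e))
  (X0 : 'cV[R]_d) (U : nat -> 'cV[R]_e) (k : nat) : 'cV[R]_d :=
  match k with
  | 0 => X0
  | k'.+1 => Phi *m state_traj Phi Psi X0 U k' + Psi *m U k'
  end.

Definition ds_controllable (d e : nat) (Phi : 'M[R]_d) (Psi : 'M[R]_(d, e)) :=
  forall X0 : 'cV[R]_d, exists (k : nat) (U : nat -> 'cV[R]_e),
    state_traj Phi Psi X0 U k = 0.
End Defs.

(* Main.v *)
Require Import Defs.
From HB Require Import structures.
From mathcomp Require Import all_boot all_order all_algebra.
From mathcomp Require Import all_classical all_reals all_analysis.
From mathcomp Require Import complex mxtens.
Import Order.TTheory GRing.Theory Num.Theory numFieldNormedType.Exports.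
Local Open Scope ring_scope.
Local Open Scope complex_scope.

Lemma cmxE (R : realType) k l (M : 'M[R]_(k, l)) :
  cmx M = map_mx (real_complex R) M.
Proof. by []. Qed.

Lemma tensDl (K : comPzRingType) a b c d (X Y : 'M[K]_(a, b)) (Z : 'M[K]_(c, d)) :
  (X + Y) *t Z = X *t Z + Y *t Z.
Proof. by apply/matrixP => i j; rewrite !mxE mulrDl. Qed.

Lemma tensZr (K : comPzRingType) a b c d (X : 'M[K]_(a, b)) (Z : 'M[K]_(c, d)) s :
  X *t (s *: Z) = s *: (X *t Z).
Proof. by apply/matrixP => i j; rewrite !mxE mulrCA. Qed.

Lemma nz_entry (K : pzRingType) a b (M : 'M[K]_(a, b)) :
  M != 0 -> exists i j, M i j != 0.
Proof.
move=> Mnz; apply/not_existsP => H; move/negP: Mnz; apply.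
apply/eqP/matrixP => i j; rewrite mxE.
by apply/eqP; apply/negPn/negP => Hne; apply: (H i); exists j.
Qed.

Theorem corollary3 (R : realType) (N n m p : nat)
  (A : 'M[R]_n) (B : 'M[R]_(n, p)) (C : 'M[R]_(m, n)) (H : 'M[R]_(n, m))
  (W : 'M[R]_N) (delta : 'I_N -> bool) (h : R) :
  (0 < N)%N -> (0 < n)%N -> (0 < m)%N -> (0 < p)%N -> 0 < h ->
  (forall i : 'I_N, W i i = 0) ->
  let Bh := intexpmx A h *m B in
  let Hh := intexpmx A h *m (H *m C) in
  let Phi_s := (1%:M : 'M[R]_N) *t expmx A h + W *t Hh in
  let Psi_s := diag_mx (\row_i ((delta i)%:R : R)) *t Bh in
  \det W = 0 ->
  (forall lam : R[i], eigenvalue (cmx W) lam ->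
     ~~ eigenvalue (cmx (expmx A h) + lam *: cmx Hh) 0) ->
  ds_controllable Phi_s Psi_s ->
  controllable_pair (cmx (expmx A h)) (cmx Bh).
Proof.
move=> _ _ _ _ _ _ Bh Hh Phi Psi detW Hev Hctrl z.
set F := cmx (expmx A h); set G := cmx Bh.
apply/eqP; rewrite eqn_leq rank_leq_row /= leqNgt; apply/negP => Hlt.
have: kermx (row_mx (z%:M - F) G) != 0.
  by rewrite -mxrank_eq0 mxrank_ker subn_eq0 -ltnNge.
case/rowV0Pn => v /sub_kermxP Hv vnz.
move: Hv; rewrite mul_mx_row => /eqP; rewrite row_mx_eq0 => /andP[/eqP Hv1 /eqP Hv2].
have HvF : v *m F = z *: v.
  by move/eqP: Hv1; rewrite mulmxBr mul_mx_scalar subr_eq0 => /eqP <-.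
have W0 : eigenvalue (cmx W) 0.
  rewrite /eigenvalue /eigenspace -mxrank_eq0 mxrank_ker subn_eq0.
  rewrite -ltnNge ltn_neqAle rank_leq_row andbT; apply/negP => Hr.
  have : row_free (cmx W - 0%:M) by [].
  rewrite raddf0 subr0 row_free_unit unitmxE cmxE det_map_mx detW rmorph0.
  by rewrite unitr0.
have znz : z != 0.
  apply/eqP => z0; move: (Hev 0 W0); rewrite scale0r addr0 => /negP; apply.
  by apply/eigenvalueP; exists v => //; rewrite HvF z0.
case/eigenvalueP: W0 => xi; rewrite scale0r => Hxi xinz.
pose w := xi *t v.
have C1 : w *m cmx Phi = z *: w.
  rewrite /w /Phi cmxE map_mxD !map_mxT map_mx1 mulmxDr !tensmx_mul.
  by rewrite mulmx1 -cmxE Hxi tens0mx addr0 -/F HvF tensZr.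
have C2 : w *m cmx Psi = 0.
  by rewrite /w /Psi cmxE map_mxT tensmx_mul -cmxE -/G Hv2 tensmx0.
have C3 : forall X0 U k,
    w *m cmx (state_traj Phi Psi X0 U k) = z ^+ k *: (w *m cmx X0).
  move=> X0 U; elim=> [|k IH] /=; first by rewrite expr0 scale1r.
  rewrite cmxE map_mxD !map_mxM -!cmxE mulmxDr !mulmxA C1 C2 mul0mx addr0.
  by rewrite -scalemxAl IH scalerA exprS.
have wnz : w != 0.
  have [a [i Hi]] := nz_entry _ _ _ _ xinz; have [a' [j Hj]] := nz_entry _ _ _ _ vnz.
  apply/eqP => /matrixP /(_ (mxtens_index (a, a')) (mxtens_index (i, j))).
  by rewrite tensmxE mxE => /eqP; rewrite mulf_eq0 (negPf Hi) (negPf Hj).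
have [a [b Hab]] := nz_entry _ _ _ _ wnz.
have [k [U Hk]] := Hctrl (delta_mx b 0).
move: (C3 (delta_mx b 0) U k); rewrite Hk !cmxE map_mx0 map_delta_mx -colE mulmx0.
move/eqP; rewrite eq_sym scaler_eq0 expf_eq0 (negPf znz) andbF /=.
move/eqP/matrixP/(_ a 0); rewrite !mxE => Hc; move: Hab; by rewrite !mxE Hc eqxx.
Qed.
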